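(* Let $G$ be a connected bipartite graph with color classes $E$ and $V$. Let $\mathbf f,\mathbf g$ be hypertrees of $(V,E)$ with $\mathbf g=\mathbf f-\mathbf i_{\{e\}}+\mathbf i_{\{e'\}}$ for some $e\ne e'$ in $E$, and let $l$ be the line segment in $P_E$ from $\mathbf f^+$ to $\mathbf g^+$. Let $\Gamma$ be a spanning tree inducing $\mathbf f$ and suppose $\mathbf f^+$ is an interior point of the Minkowski cell $M_\Gamma$. Let $\varepsilon_1$ be the first edge of the unique path in $\Gamma$ from $e$ to $e'$. Then $l$ leaves $M_\Gamma$ through the codimension one stratum of the boundary of $M_\Gamma$ corresponding to removing $\varepsilon_1$ from $\Gamma$, i.e. at the point where $l$ exits $M_\Gamma$, the weight of $\varepsilon_1$ in the direct sum representation is $0$.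
   Context: A hypertree of $(V,E)$ is $\mathbf f\colon E\to\mathbf N$ such that some spanning tree $\Gamma$ of $G$ has degree $\mathbf f(e)+1$ at each $e\in E$ ($\Gamma$ induces $\mathbf f$). $\mathbf i_S$ is an indicator vector and $\mathbf f^+=\mathbf f+\frac1{|E|}\mathbf i_E$. For $v\in V$, $\Delta_v=\operatorname{conv}\{\mathbf i_{\{e\}}\mid ev\in G\}$ and $P_E=\sum_{v\in V}\Delta_v\subset\mathbf R^E$ (Minkowski sum). For a spanning tree $\Gamma$, $\Delta^\Gamma_v=\operatorname{conv}\{\mathbf i_{\{e\}}\mid ev\in\Gamma\}$ and $M_\Gamma=\sum_{v\in V}\Delta^\Gamma_v\subset P_E$; this sum is direct, so each point of $M_\Gamma$ is uniquely described by non-negative weights on the edges of $\Gamma$ (barycentric coordinates in each $\Delta^\Gamma_v$, summing to $1$ at each $v$), and the codimension one stratum corresponding to an edge $\varepsilon$ of $\Gamma$ is the set of points of $M_\Gamma$ where the weight of $\varepsilon$ is $0$. *)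

(* Defs.v *)
From mathcomp Require Import all_boot all_order all_algebra.
Set Implicit Arguments. Unset Strict Implicit. Unset Printing Implicit Defensive.
Import Order.TTheory GRing.Theory Num.Theory.
Local Open Scope ring_scope.

Section BipGraph.
Variables (E V : finType).

(* A bipartite graph G with colour classes E and V is given by its edge set,
   a set of pairs (e, v).  A subgraph (e.g. a spanning tree) is a set of such pairs. *)

Definition badj (S : {set E * V}) : rel (E + V) :=
  fun a b => match a, b with
             | inl e, inr v => (e, v) \in S
             | inr v, inl e => (e, v) \in S
             | _, _ => false
             end.

Definition bconnected (S : {set E * V}) : Prop :=
  forall a b : E + V, connect (badj S) a b.

Definition bacyclic (S : {set E * V}) : Prop :=
  ~ exists c : seq (E + V), (2 < size c)%N /\ ucycle (badj S) c.

Definition spanning_tree (G T : {set E * V}) : Prop :=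
  T \subset G /\ bconnected T /\ bacyclic T.

Definition degE (T : {set E * V}) (e : E) : nat := #|[set v | (e, v) \in T]|.

Definition induces (T : {set E * V}) (f : E -> nat) : Prop :=
  forall e, degE T e = (f e).+1.

Definition hypertree (G : {set E * V}) (f : E -> nat) : Prop :=
  exists T, spanning_tree G T /\ induces T f.

Variable R : realFieldType.

Definition fplus (f : E -> nat) : E -> R := fun x => (f x)%:R + #|E|%:R^-1.

Definition Mrep (T : {set E * V}) (w : E -> V -> R) (x : E -> R) : Prop :=
  [/\ forall e v, (e, v) \notin T -> w e v = 0,
      forall e v, 0 <= w e v,
      forall v, \sum_(e : E) w e v = 1
    & forall e, x e = \sum_(v : V) w e v].

(* the Minkowski cell M_T = sum_v Delta^T_v *)
Definition inMcell (T : {set E * V}) (x : E -> R) : Prop := exists w, Mrep T w x.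

(* interior point of M_T, relative to the affine hyperplane
   { y | sum_e y_e = |V| } which is the affine hull of P_E (and of M_T) *)
Definition Mcell_interior (T : {set E * V}) (x : E -> R) : Prop :=
  exists2 d : R, 0 < d &
    forall y : E -> R, \sum_(e : E) y e = #|V|%:R ->
      (forall e, `|y e - x e| < d) -> inMcell T y.

Definition seg (x y : E -> R) (t : R) : E -> R := fun z => (1 - t) * x z + t * y z.

End BipGraph.

(* Main.v *)
Require Import Defs.
From mathcomp Require Import all_boot all_order all_algebra.
From mathcomp Require Import ring lra zify.
Set Implicit Arguments. Unset Strict Implicit. Unset Printing Implicit Defensive.
Import Order.TTheory GRing.Theory Num.Theory.
Local Open Scope ring_scope.

Lemma connect_closed (T : finType) (r : rel T) (P : T -> Prop) x :
  P x -> (forall y z, connect r x y -> r y z -> P y -> P z) ->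
  forall z, connect r x z -> P z.
Proof.
move=> Px H z /connectP [q pq ->].
suff: forall y, connect r x y -> P y -> forall q, path r y q -> P (last y q).
  by move=> /(_ x (connect0 _ _) Px q pq).
move=> y cxy Py q0; elim: q0 y cxy Py => [|z0 q0 IH] y cxy Py //= /andP[ryz pq'].
apply: IH pq'; first exact: connect_trans cxy (connect1 ryz).
exact: H cxy ryz Py.
Qed.

Section Graph.
Variables (E V : finType).
Implicit Types S : {set E * V}.

Lemma badj_sym S : symmetric (badj S).
Proof. by case=> [x|x] [y|y]. Qed.

Lemma csym S : connect_sym (badj S).
Proof. exact/sym_connect_sym/badj_sym. Qed.

Lemma badj_sub S p y z : badj (S :\ p) y z -> badj S y z.
Proof. by case: p => a b; case: y z => [y|y] [z|z] //=; rewrite in_setD1 => /andP[]. Qed.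

Lemma badj_rem S a b y z : badj S y z -> ~~ badj (S :\ (a,b)) y z ->
  (y = inl a /\ z = inr b) \/ (y = inr b /\ z = inl a).
Proof.
case: y z => [y|y] [z|z] //=; rewrite in_setD1 => -> ; rewrite andbT negbK
  => /eqP [-> ->]; auto.
Qed.

Lemma badj_ex S y z : badj S y z -> exists a b, (a,b) \in S /\
  ((y = inl a /\ z = inr b) \/ (y = inr b /\ z = inl a)).
Proof.
case: y z => [y|y] [z|z] //= h.
  by exists y, z; split; [|left].
by exists z, y; split; [|right].
Qed.

Lemma path_avoid S a b n x s : (n = inl a \/ n = inr b) -> n \notin x :: s ->
  path (badj S) x s -> path (badj (S :\ (a,b))) x s.
Proof.
move=> Hn; elim: s x => [|y s IH] x //=.
rewrite in_cons negb_or => /andP[nx nys] /andP[bxy ps].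
rewrite IH // andbT; apply: contraT => nb.
move: nys; rewrite in_cons negb_or => /andP[ny _].
by case: (badj_rem bxy nb) => [[ex ey]|[ex ey]]; case: Hn => en; subst;
  rewrite ?eqxx in nx ny.
Qed.


End Graph.
Lemma no_cycle_conn (E V : finType) (S : {set E*V}) a b : bacyclic S -> (a,b) \in S ->
  ~ connect (badj (S :\ (a,b))) (inr b) (inl a).
Proof.
move=> Hac ab H.
move/connectP: H => [q pq].
case/shortenP: pq => q' pq' uq _ lq'.
apply: Hac; exists (inr b :: q'); split.
  case: q' pq' uq lq' => [|y [|z q'']] //= /andP[h _] _ ey.
  by subst y; rewrite /= in_setD1 eqxx in h.
rewrite /ucycle uq andbT /cycle rcons_path -lq' /= ab andbT.
by apply: sub_path pq' => y z; apply: badj_sub.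
Qed.

Section Count.
Variables (E V : finType) (T : {set E * V}).
Hypotheses (Hc : bconnected T) (Ha : bacyclic T).
Variable r : E + V.

Definition far (p : E * V) : E + V :=
  if connect (badj (T :\ p)) r (inl p.1) then inr p.2 else inl p.1.
Definition oth (p : E * V) : E + V :=
  if connect (badj (T :\ p)) r (inl p.1) then inl p.1 else inr p.2.

Lemma split_conn a b : forall z,
  connect (badj (T :\ (a,b))) (inl a) z \/ connect (badj (T :\ (a,b))) (inr b) z.
Proof.
move=> z; apply: (@connect_closed _ _ (fun z => connect (badj (T :\ (a,b))) (inl a) z \/ connect (badj (T :\ (a,b))) (inr b) z) (inl a)) (Hc (inl a) z).
  by left; exact: connect0.
move=> y u _ ryu Py; case: (boolP (badj (T :\ (a,b)) y u)) => h.
  by case: Py => c; [left|right]; exact: connect_trans c (connect1 h).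
by case: (badj_rem ryu h) => [[_ ->]|[_ ->]]; [right|left]; exact: connect0.
Qed.

Lemma far_end a b : far (a,b) = inl a /\ oth (a,b) = inr b \/
                    far (a,b) = inr b /\ oth (a,b) = inl a.
Proof. by rewrite /far /oth /=; case: ifP; auto. Qed.

Lemma far_prop p : p \in T ->
  ~ connect (badj (T :\ p)) r (far p) /\ connect (badj (T :\ p)) r (oth p).
Proof.
case: p => a b ab; rewrite /far /oth /=; have sy := csym (T :\ (a,b)).
case: ifP => h; split => //.
  move=> c; apply: (no_cycle_conn Ha ab).
  by rewrite sy; apply: connect_trans c; rewrite sy.
  by move=> c; rewrite c in h.
case: (split_conn a b r) => c; first by rewrite sy c in h.
by rewrite sy.
Qed.

Lemma far_neq p : p \in T -> far p != r.
Proof.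
move=> pT; apply/eqP => e; case: (far_prop pT) => h _; apply: h.
by rewrite e connect0.
Qed.

Lemma badj_fo S p : badj S (far p) (oth p) = (p \in S) /\ badj S (oth p) (far p) = (p \in S).
Proof. by case: p => a b; rewrite /far /oth /=; case: ifP. Qed.

Lemma far_inj : {in T &, injective far}.
Proof.
move=> p [qa qb] pT qT Hf; set q := (qa, qb); apply/eqP; apply: contraT => npq.
case: (far_prop qT) => nq _; exfalso; apply: nq.
case: (far_prop pT) => np op.
have H : forall u, connect (badj (T :\ p)) r u -> connect (badj (T :\ q)) r u.
  apply: (@connect_closed _ _ (fun u => connect (badj (T :\ q)) r u)); first exact: connect0.
  move=> y u cy byu Py; case: (boolP (badj (T :\ q) y u)) => h.
    exact: connect_trans Py (connect1 h).
  have cu := connect_trans cy (connect1 byu).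
  have [[ey eu]|[ey eu]] := badj_rem (badj_sub byu) h;
  case: (far_end qa qb) => [[fq _]|[fq _]]; rewrite fq in Hf;
    by exfalso; apply: np; rewrite Hf -?ey -?eu.
apply: connect_trans (H _ op) (connect1 _).
rewrite /q; case: (badj_fo (T :\ (qa,qb)) p) => _ hh; rewrite -Hf hh.
by rewrite in_setD1 pT andbT; apply: contra npq => /eqP ->.
Qed.

Lemma far_surj z : z != r -> exists2 p, p \in T & far p = z.
Proof.
move=> nzr; move/connectP: (Hc z r) => [q pq].
case/shortenP: pq => q' pq' uq _ lq.
case: q' pq' uq lq => [|y q'] /=; first by move=> _ _ ez; rewrite ez eqxx in nzr.
move=> /andP[bzy py] /andP[nz _] lq.
have [a [b [ab Hab]]] := badj_ex bzy.
exists (a,b) => //.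
have cy : connect (badj (T :\ (a,b))) r y.
  rewrite (csym (T :\ (a,b))); apply/connectP; exists q' => //.
  apply: (@path_avoid _ _ _ _ _ z) => //.
  by case: Hab => [[-> _]|[-> _]]; auto.
case: (far_prop ab) => nf _.
by case: Hab => [[ez ey]|[ez ey]]; case: (far_end a b) => [[fa _]|[fa _]];
  rewrite fa; subst => //; rewrite fa in nf.
Qed.

Lemma card_tree : #|T| = (#|E| + #|V|).-1.
Proof.
have -> : (#|E| + #|V|).-1 = #|[set~ r]| by rewrite cardsC1 card_sum.
rewrite -(card_in_imset far_inj); apply: eq_card => z.
rewrite !inE; apply/imsetP/idP.
  by move=> [p pT ->]; exact: far_neq.
by move/far_surj => [p pT <-]; exists p.
Qed.

End Count.

Lemma degsum (E V : finType) (T : {set E * V}) : (\sum_e degE T e)%N = #|T|.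
Proof.
transitivity (\sum_e \sum_v (((e,v) \in T) : nat))%N.
  apply: eq_bigr => e _; rewrite /degE -sum1_card big_mkcond /=.
  by apply: eq_bigr => v _; rewrite inE; case: ((e,v) \in T).
rewrite -sum1_card pair_big /= [in RHS]big_mkcond /=; apply: eq_bigr => [[e v]] _ /=.
by case: ((e,v) \in T).
Qed.

Section Flow.
Variables (E V : finType) (R : realFieldType).
Implicit Types S : {set E * V}.

Definition delta (x y : E + V) (a : E) (b : V) : R :=
  match x, y with
  | inl e0, inr v0 => - ((e0 == a) && (v0 == b))%:R
  | inr v0, inl e0 => ((e0 == a) && (v0 == b))%:R
  | _, _ => 0
  end.

Fixpoint dflow (x : E + V) (s : seq (E + V)) (a : E) (b : V) : R :=
  if s is y :: s' then delta x y a b + dflow y s' a b else 0.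

Lemma dflow_out S x s a b : path (badj S) x s -> (a,b) \notin S -> dflow x s a b = 0.
Proof.
move=> + nab; elim: s x => [|y s IH] x //= /andP[bxy ps].
rewrite IH // addr0.
have hf : forall e0 v0, (e0, v0) \in S -> ((e0 == a) && (v0 == b)) = false.
  move=> e0 v0 h; apply: contraNF nab => /andP[/eqP<- /eqP<-]; exact h.
clear ps IH; by case: x y bxy => [x|x] [y|y] //= h; rewrite hf //= oppr0.
Qed.

Lemma sum_eqbl (x : E) (c : bool) : \sum_a ((x == a) && c)%:R = c%:R :> R.
Proof.
rewrite (bigD1 x) //= eqxx big1 ?addr0 // => a; rewrite eq_sym => /negbTE ->.
by [].
Qed.

Lemma sum_eqbr (y : V) (c : bool) : \sum_v (c && (y == v))%:R = c%:R :> R.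
Proof.
rewrite (bigD1 y) //= eqxx andbT big1 ?addr0 // => v; rewrite eq_sym => /negbTE ->.
by rewrite andbF.
Qed.

Lemma dflow_sumE S x s v : path (badj S) x s ->
  \sum_a dflow x s a v = (x == inr v)%:R - (last x s == inr v)%:R.
Proof.
elim: s x => [|y s IH] x /=; first by rewrite big1 ?subrr.
move=> /andP[bxy ps]; rewrite big_split /= IH //.
suff -> : \sum_a delta x y a v = (x == inr v)%:R - (y == inr v)%:R.
  by rewrite addrA subrK.
clear ps IH; case: x y bxy => [x|x] [y|y] //= _.
  by rewrite sumrN sum_eqbl; rewrite [(inr y == inr v)]/eq_op /= sub0r.
by rewrite sum_eqbl [(inr x == inr v)]/eq_op /= subr0.
Qed.

Lemma dflow_sumV S x s a : path (badj S) x s ->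
  \sum_v dflow x s a v = (last x s == inl a)%:R - (x == inl a)%:R.
Proof.
elim: s x => [|y s IH] x /=; first by rewrite big1 ?subrr.
move=> /andP[bxy ps]; rewrite big_split /= IH //.
suff -> : \sum_v delta x y a v = (y == inl a)%:R - (x == inl a)%:R.
  by rewrite addrC addrA subrK.
clear ps IH; case: x y bxy => [x|x] [y|y] //= _.
  by rewrite sumrN (eq_bigr (fun v => ((x == a) && (y == v))%:R)) ?sum_eqbr;
   [rewrite [(inl x == inl a)]/eq_op /= sub0r | move=> v _; rewrite eq_sym].
by rewrite sum_eqbr subr0.
Qed.

Lemma delta_cases x y a b : (delta x y a b = -1 /\ x = inl a /\ y = inr b) \/
   0 <= delta x y a b.
Proof.
case: x y => [x|x] [y|y] /=; try by right.
  case: (eqVneq x a) => [->|nxa]; case: (eqVneq y b) => [->|nyb];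
   rewrite /= ?andbF ?oppr0; by [left | right].
Qed.

Lemma dflow_dec x s a b : uniq (x :: s) -> 0 <= dflow x s a b \/
  (-1 <= dflow x s a b /\ exists s1 s2, s = s1 ++ inr b :: s2 /\ last x s1 = inl a).
Proof.
elim: s x => [|y s IH] x /=; first by left.
move=> /andP[nx uys].
case: (delta_cases x y a b) => [[-> [ex ey]]|dpos].
  subst x y; case: (IH _ uys) => [h|[_ [s1 [s2 [es _]]]]].
    right; split; first by rewrite -[X in X <= _]addr0 lerD2l.
    by exists [::], s.
  by move: uys; rewrite /= es mem_cat in_cons eqxx orbT.
case: (IH _ uys) => [h|[h [s1 [s2 [es el]]]]].
  by left; rewrite addr_ge0.
right; split; first by rewrite -[X in X <= _]add0r lerD.
by exists (y :: s1), s2; rewrite es.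
Qed.

Definition cutset S (p : E * V) (e2 : E) : {set E + V} :=
  [set z | connect (badj (S :\ p)) (inl e2) z].

Lemma cut_formula S a b e2 w (x : E -> R) : Mrep S w x -> (a,b) \in S ->
  inr b \in cutset S (a,b) e2 -> inl a \notin cutset S (a,b) e2 ->
  w a b = \sum_v (inr v \in cutset S (a,b) e2)%:R
          - \sum_e' (inl e' \in cutset S (a,b) e2)%:R * x e'.
Proof.
set C := cutset S (a,b) e2.
move=> [w0 wpos wsum wx] ab bC aC.
have key : forall e' v, w e' v * ((inr v \in C)%:R - (inl e' \in C)%:R) =
                        ((e' == a) && (v == b))%:R * w a b.
  move=> e' v; case: (eqVneq (e',v) (a,b)) => [[-> ->]|ne].
    by rewrite bC (negbTE aC) !eqxx /= subr0 mulr1 mul1r.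
  have -> : ((e' == a) && (v == b)) = false by apply/negbTE; rewrite -xpair_eqE.
  rewrite mul0r; case: (boolP ((e',v) \in S)) => hs; last by rewrite w0 ?mul0r.
  have adj : badj (S :\ (a,b)) (inl e') (inr v) by rewrite /= in_setD1 ne hs.
  suff -> : (inr v \in C) = (inl e' \in C) by rewrite subrr mulr0.
  rewrite !inE; apply/idP/idP => h; by apply: connect_trans h (connect1 _).
have L : \sum_e' \sum_v w e' v * ((inr v \in C)%:R - (inl e' \in C)%:R) =
         \sum_v (inr v \in C)%:R - \sum_e' (inl e' \in C)%:R * x e'.
  transitivity (\sum_e' \sum_v w e' v * (inr v \in C)%:R -
                \sum_e' \sum_v w e' v * (inl e' \in C)%:R).
    rewrite -sumrB; apply: eq_bigr => e' _; rewrite -sumrB.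
    by apply: eq_bigr => v _; rewrite mulrBr.
  congr (_ - _).
    rewrite exchange_big; apply: eq_bigr => v _.
    by rewrite -mulr_suml wsum mul1r.
  by apply: eq_bigr => e' _; rewrite -mulr_suml -wx mulrC.
rewrite -L (eq_bigr (fun e' => (e' == a)%:R * w a b)).
  rewrite (bigD1 a) //= eqxx mul1r big1 ?addr0 // => e'.
  by move/negbTE => ->; rewrite mul0r.
move=> e' _; rewrite (eq_bigr (fun v => ((e' == a) && (v == b))%:R * w a b)).
  rewrite -mulr_suml; congr (_ * _).
  by rewrite (eq_bigr (fun v => ((e' == a) && (b == v))%:R)) ?sum_eqbr //
     => v _; rewrite (eq_sym v).
by move=> v _; rewrite key.
Qed.

End Flow.

Section DE.
Variables (E V : finType).
Implicit Types S : {set E * V}.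

Lemma DE S (x : E + V) s s1 s2 a b e1 e2 : bacyclic S -> path (badj S) x s ->
  uniq (x :: s) -> x = inl e1 -> last x s = inl e2 -> s = s1 ++ inr b :: s2 ->
  last x s1 = inl a ->
  [/\ (a,b) \in S, inr b \in cutset S (a,b) e2, inl a \notin cutset S (a,b) e2
    & inl e1 \notin cutset S (a,b) e2].
Proof.
move=> Hac Hp Hu ex el es ea; subst s.
move: Hp; rewrite cat_path ea /= => /and3P[p1 ab p2].
have := Hu; rewrite -cat_cons cat_uniq => /and3P[_ hn _].
have nb : inr b \notin x :: s1.
  by apply: contra hn => h; apply/hasP; exists (inr b) => //; rewrite in_cons eqxx.
have na : inl a \notin inr b :: s2.
  by apply: contra hn => h; apply/hasP; exists (inl a) => //; rewrite -ea mem_last.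
have c1 : connect (badj (S :\ (a,b))) x (inl a).
  apply/connectP; exists s1; last by rewrite ea.
  by apply: (@path_avoid _ _ _ _ _ (inr b)) => //; right.
have c2 : connect (badj (S :\ (a,b))) (inr b) (inl e2).
  apply/connectP; exists s2.
    by apply: (@path_avoid _ _ _ _ _ (inl a)) => //; left.
  by rewrite -el last_cat ea.
have K := no_cycle_conn Hac ab.
have sy := csym (S :\ (a,b)).
split => //; rewrite inE.
- by rewrite sy.
- by apply/negP => h; apply: K; exact: connect_trans c2 h.
- apply/negP => h; apply: K; apply: connect_trans c2 (connect_trans h _).
  by rewrite -ex.
Qed.

Lemma cut_sub S a b e v e2 : inl e \notin cutset S (a,b) e2 ->
  forall z, z \in cutset S (a,b) e2 -> z \in cutset S (e,v) e2.
Proof.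
move=> ne z; rewrite !inE.
apply: (@connect_closed _ _ (fun z => connect (badj (S :\ (e,v))) (inl e2) z)).
  exact: connect0.
move=> y u cy byu Py; case: (boolP (badj (S :\ (e,v)) y u)) => h.
  exact: connect_trans Py (connect1 h).
have cu := connect_trans cy (connect1 byu).
rewrite inE in ne.
by case: (badj_rem (badj_sub byu) h) => [[ey eu]|[ey eu]];
  [rewrite -ey cy in ne | rewrite -eu cu in ne].
Qed.

End DE.

Section Num.
Variable R : realFieldType.

Lemma int_step (M F : nat) (c : R) : 0 < c -> 0 <= M%:R - F%:R - c ->
  1 - c <= M%:R - F%:R - c.
Proof.
move=> c0 h; have: (F < M)%N by rewrite -(ltr_nat R); lra.
by rewrite -addn1 -(ler_nat R) natrD => h2; lra.
Qed.

Lemma int_step2 (M F : nat) (c : R) : c < 1 -> M%:R - F%:R - c <= 1 ->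
  M%:R - F%:R - c <= 1 - c.
Proof.
move=> c1 h; have: (M < F + 2)%N by rewrite -(ltr_nat R) natrD; lra.
by rewrite addn2 ltnS -addn1 -(ler_nat R) natrD => h2; lra.
Qed.

Lemma sum_ind (I : finType) (F : I -> R) y : \sum_x F x * (x == y)%:R = F y.
Proof.
rewrite (bigD1 y) //= eqxx mulr1 big1 ?addr0 // => x /negbTE ->.
by rewrite mulr0.
Qed.

Lemma int_nat (n : nat) : (n%:Z)%:~R = n%:R :> R.
Proof. by []. Qed.

End Num.

Theorem lemma4p3 (R : realFieldType) (E V : finType) (G : {set E * V})
  (f g : E -> nat) (e e' : E) (Gam : {set E * V}) :
  bconnected G ->
  hypertree G f -> hypertree G g ->
  e != e' ->
  (forall x : E, (g x)%:Z = (f x)%:Z - (x == e)%:Z + (x == e')%:Z) ->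
  spanning_tree G Gam -> induces Gam f ->
  Mcell_interior Gam (fplus R f) ->
  forall (v1 : V) (p : seq (E + V)),
    path (badj Gam) (inl e) (inr v1 :: p) ->
    uniq (inl e :: inr v1 :: p) ->
    last (inr v1) p = inl e' ->
  (* first edge of the path from e to e' is eps1 = (e, v1) *)
  exists t0 : R,
    [/\ 0 <= t0 < 1,
        (forall t, 0 <= t <= t0 -> inMcell Gam (seg (fplus R f) (fplus R g) t)),
        (forall t, t0 < t <= 1 -> ~ inMcell Gam (seg (fplus R f) (fplus R g) t))
      & forall w, Mrep Gam w (seg (fplus R f) (fplus R g) t0) -> w e v1 = 0].
Proof.
move=> _ _ _ nee' Hg [_ [Gc Ga]] Hind Hint v1 p Hpath Huniq Hlast.
set x0 : E + V := inl e.
set s := inr v1 :: p.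
have Hl : last x0 s = inl e' by [].
have E0 : (0 < #|E|)%N by apply/card_gt0P; exists e.
have Hsf : (\sum_z f z + 1)%N = #|V|.
  have H1 := degsum Gam; rewrite (card_tree Gc Ga (inl e)) in H1.
  have H2 : (\sum_z degE Gam z = \sum_z f z + #|E|)%N.
    rewrite (eq_bigr (fun z => f z + 1)%N) => [|z _]; last by rewrite Hind addn1.
    by rewrite big_split /= sum1_card (@eq_card _ _ E).
  lia.
have En0 : #|E|%:R != 0 :> R by rewrite pnatr_eq0 -lt0n.
have u0 : 0 < #|E|%:R^-1 :> R by rewrite invr_gt0 ltr0n.
have Hsum : \sum_z fplus R f z = #|V|%:R.
  rewrite /fplus big_split /= sumr_const (@eq_card _ _ E) // -natr_sum -[_^-1 *+ _]mulr_natr mulVf //.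
  by rewrite -Hsf natrD.
have [d d0 Hd] := Hint.
have [w0 Hw0] := Hd (fplus R f) Hsum (fun z => ltac:(by rewrite subrr normr0)).
have Hw0' := Hw0; case: Hw0' => w00 w0pos w0sum w0x.
have Hx : forall t z, seg (fplus R f) (fplus R g) t z =
            fplus R f z + t * ((z == e')%:R - (z == e)%:R).
  move=> t z; rewrite /seg /fplus.
  have := congr1 (fun k : int => k%:~R : R) (Hg z).
  rewrite /= intrD intrB !int_nat => ->; ring.

pose B (C : {set E + V}) z : R := (inl z \in C)%:R.
pose cnt (C : {set E + V}) := \sum_z B C z.
pose u : R := #|E|%:R^-1.
have Bge0 : forall C z, 0 <= B C z by move=> C z; rewrite /B ler0n.
have split_fp : forall C, \sum_z B C z * fplus R f z =
   (\sum_z ((inl z \in C) * f z)%N)%:R + cnt C * u.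
  move=> C; rewrite natr_sum /cnt mulr_suml -big_split /=.
  by apply: eq_bigr => z _; rewrite /fplus /B natrM /u mulrDr.
have cnt_ge1 : forall C : {set E + V}, inl e' \in C -> 1 <= cnt C.
  move=> C h; rewrite /cnt (bigD1 e') //= {1}/B h /= -[X in X <= _]addr0 lerD2l.
  by apply: sumr_ge0 => z _.
have cnt_lt : forall C : {set E + V}, inl e \notin C -> cnt C < #|E|%:R.
  move=> C h.
  have : \sum_z (B C z + (z == e)%:R) <= \sum_(z : E) (1 : R).
    apply: ler_sum => z _; rewrite /B; case: (eqVneq z e) => [->|_].
      by rewrite (negbTE h) add0r.
    by rewrite addr0 lern1 leq_b1.
  rewrite big_split /= sumr_const (@eq_card _ _ E) //.
  have h1 : \sum_z (z == e)%:R = 1 :> R.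
    by rewrite (eq_bigr (fun z => 1 * (z == e)%:R)) ?sum_ind // => z _; rewrite mul1r.
  rewrite h1 /cnt -mulr_natr mul1r; lra.
have w0le1 : forall a b, w0 a b <= 1.
  move=> a b; rewrite -(w0sum b) (bigD1 a) //= -[X in X <= _]addr0 lerD2l.
  by apply: sumr_ge0 => z _.
pose C0 := cutset Gam (e, v1) e'.
have [ab0 b0 a0 _] := DE Ga Hpath Huniq (erefl x0) Hl (s1 := [::]) (erefl s) (erefl _).
have e'C0 : inl e' \in C0 by rewrite inE connect0.
have c0pos : 0 < cnt C0 * u by apply: mulr_gt0 => //; apply: lt_le_trans (cnt_ge1 _ e'C0).
have c0lt : cnt C0 * u < 1.
  rewrite -(mulfV En0) ltr_pM2r //; exact: cnt_lt.
have w0C : forall a b (C := cutset Gam (a,b) e'), (a,b) \in Gam ->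
    inr b \in C -> inl a \notin C ->
    w0 a b = (\sum_v ((inr v \in C) : nat))%:R
             - (\sum_z ((inl z \in C) * f z)%N)%:R - cnt C * u.
  move=> a b C ab bC aC.
  by rewrite (cut_formula Hw0 ab bC aC) (split_fp C) !natr_sum opprD addrA.
have t0le : w0 e v1 <= 1 - cnt C0 * u.
  have := w0C e v1 ab0 b0 a0; rewrite -/C0 => h; rewrite h.
  by apply: int_step2 => //; rewrite -h.
have key : forall a b s1 s2, s = s1 ++ inr b :: s2 -> last x0 s1 = inl a ->
    w0 e v1 <= w0 a b.
  move=> a b s1 s2 es ea.
  have [ab bC aC eC] := DE Ga Hpath Huniq (erefl x0) Hl es ea.
  set C := cutset Gam (a, b) e' in bC aC eC.
  have e'C : inl e' \in C by rewrite inE connect0.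
  have cpos : 0 < cnt C * u by apply: mulr_gt0 => //; apply: lt_le_trans (cnt_ge1 _ e'C).
  have cle : cnt C * u <= cnt C0 * u.
    rewrite ler_pM2r //; apply: ler_sum => z _; rewrite /B.
    case h: (inl z \in C); last by rewrite ler0n.
    by rewrite (@cut_sub _ _ Gam a b e v1 e' eC _ h).
  have := w0C a b ab bC aC => h.
  have h2 : 1 - cnt C * u <= w0 a b.
    rewrite h; apply: int_step; first exact: cpos.
    by move: (w0pos a b); rewrite h.
  lra.
have wt : forall t w, Mrep Gam w (seg (fplus R f) (fplus R g) t) -> w e v1 = w0 e v1 - t.
  move=> t w Hw; rewrite (cut_formula Hw ab0 b0 a0) (cut_formula Hw0 ab0 b0 a0).
  rewrite (eq_bigr (fun z => (inl z \in C0)%:R * fplus R f z +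
     t * ((inl z \in C0)%:R * (z == e')%:R) - t * ((inl z \in C0)%:R * (z == e)%:R)))
     => [|z _]; last by rewrite Hx; ring.
  rewrite sumrB big_split /= -!mulr_sumr !sum_ind e'C0 (negbTE a0) /=; ring.
exists (w0 e v1); split.
- by rewrite w0pos /=; lra.
- move=> t /andP[t0 tle].
  exists (fun a b => w0 a b + t * dflow R x0 s a b); split.
  + move=> a b nab; rewrite w00 // (dflow_out R Hpath nab); ring.
  + move=> a b; case: (dflow_dec R a b Huniq) => [h|[h [s1 [s2 [es ea]]]]].
      by apply: addr_ge0 => //; apply: mulr_ge0.
    have := key _ _ _ _ es ea => hk.
    have : 0 <= t * (dflow R x0 s a b + 1) by apply: mulr_ge0 => //; lra.
    nra.
  + move=> v; rewrite big_split /= -mulr_sumr (dflow_sumE R v Hpath) w0sum Hl /=.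
    by rewrite subrr mulr0 addr0.
  + move=> z; rewrite Hx big_split /=.
    rewrite -mulr_sumr (dflow_sumV R z Hpath) -w0x Hl /=.
    by rewrite [(inl e' == inl z)]/eq_op [(x0 == inl z)]/eq_op /= (eq_sym e') (eq_sym e).
- move=> t /andP[tlt _] [w Hw]; have := wt _ _ Hw; case: Hw => _ wpos _ _.
  by move: (wpos e v1) => /[swap] ->; lra.
- by move=> w Hw; rewrite (wt _ _ Hw) subrr.
Qed.
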